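(* Let $t$ be a positive integer and $n=2t+1$. Then the locating chromatic number of the friendship graph $Fr_n$ is $1+\min\{k\in\mathbb{N}: t\le\binom{k}{2}\}$.
   Context: All graphs are finite and simple. The friendship graph $Fr_n$, $n=2t+1$, is the join of $K_1$ with $t$ disjoint copies of $K_2$, i.e. one central vertex adjacent to all vertices of $t$ disjoint edges. A proper $k$-coloring of $G$ is a map from $V(G)$ onto $[k]=\{1,\dots,k\}$ with adjacent vertices receiving different colors. For a connected graph $G$ with proper $k$-coloring $f$ and color classes $V_i=f^{-1}(i)$, the color code of $v$ is $(d(v,V_1),\dots,d(v,V_k))$, where $d(v,S)=\min_{x\in S}d(v,x)$; $f$ is a locating coloring if distinct vertices have distinct color codes, and the locating chromatic number $\chi_L(G)$ is the minimum number of colors in a locating coloring. *)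

(* Defs.v *)
From mathcomp Require Import all_boot.
Set Implicit Arguments. Unset Strict Implicit. Unset Printing Implicit Defensive.

Section Graphs.
Variable T : finType.
Variable e : rel T.

Definition walk_len (k : nat) (u v : T) : bool :=
  [exists p : k.-tuple T, path e u p && (last u p == v)].

(* graph distance: least k with a walk of length k (for connected graphs,
   this is always < #|T|; otherwise the default #|T|) *)
Definition gdist (u v : T) : nat :=
  find (fun k => walk_len k u v) (iota 0 #|T|).

(* distance from a vertex to a set (classes are nonempty for onto colorings) *)
Definition setdist (v : T) (S : {set T}) : nat :=
  \big[minn/#|T|]_(x in S) gdist v x.

Definition color_class (k : nat) (f : {ffun T -> 'I_k}) (i : 'I_k) : {set T} :=
  [set x | f x == i].

Definition proper_coloring (k : nat) (f : {ffun T -> 'I_k}) : bool :=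
  [forall x, forall y, e x y ==> (f x != f y)] &&
  [forall i : 'I_k, exists x, f x == i].

Definition color_code (k : nat) (f : {ffun T -> 'I_k}) (v : T) : {ffun 'I_k -> nat} :=
  [ffun i => setdist v (color_class f i)].

Definition locating_coloring (k : nat) (f : {ffun T -> 'I_k}) : bool :=
  proper_coloring f &&
  [forall u, forall v, (color_code f u == color_code f v) ==> (u == v)].

Definition has_locating_coloring (k : nat) : bool :=
  [exists f : {ffun T -> 'I_k}, locating_coloring f].

(* locating chromatic number: least k admitting a locating k-coloring
   (for connected graphs such k <= #|T| always exists) *)
Definition locating_chromatic_number : nat :=
  find has_locating_coloring (iota 0 #|T|.+1).

End Graphs.

(* Friendship graph Fr_{2t+1}: vertex 0 is the centre, vertices 2i+1, 2i+2
   (i < t) form the i-th triangle edge. *)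
Definition friendship_adj (t : nat) : rel 'I_(2 * t + 1) :=
  fun x y => (x != y) &&
    [|| nat_of_ord x == 0, nat_of_ord y == 0 | (x.-1)./2 == (y.-1)./2].
Arguments friendship_adj t : clear implicits.

(* Main.v *)
Require Import Defs.
From mathcomp Require Import all_boot zify.
Set Implicit Arguments. Unset Strict Implicit. Unset Printing Implicit Defensive.

Lemma find_iota_le (a : pred nat) N d : d < N ->
  (find a (iota 0 N) <= d) = [exists k : 'I_d.+1, a k].
Proof.
move=> dN; apply/idP/existsP.
  move=> fd; have hf : find a (iota 0 N) < size (iota 0 N) by rewrite size_iota; lia.
  have hf' := hf; rewrite -has_find in hf'.
  have := nth_find 0 hf'; rewrite nth_iota; last by rewrite size_iota in hf.
  rewrite add0n => H; exists (Ordinal (fd : find a (iota 0 N) < d.+1)); exact H.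
case=> k ak; rewrite leqNgt; apply/negP => lt.
have lk : k < find a (iota 0 N) by have := ltn_ord k; lia.
have := before_find 0 lk; rewrite nth_iota ?add0n ?ak //; have := ltn_ord k; lia.
Qed.

Section Gen.
Variable T : finType.
Variable e : rel T.

Lemma gdist_le u v d : d < #|T| ->
  (gdist e u v <= d) = [exists k : 'I_d.+1, walk_len e k u v].
Proof. by move=> dN; rewrite /gdist find_iota_le. Qed.

Lemma walk_len0 u v : walk_len e 0 u v = (u == v).
Proof.
apply/existsP/idP => [[p]|/eqP <-].
  by rewrite tuple0 /=.
by exists [tuple]; rewrite /= eqxx.
Qed.

Lemma walk_len1 u v : walk_len e 1 u v = e u v.
Proof.
apply/existsP/idP => [[p]|H].
  case/tupleP: p => x p; rewrite tuple0 /= andbT => /andP [H /eqP <-] //.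
by exists [tuple v]; rewrite /= H eqxx.
Qed.

Lemma bigmin_le (P : pred T) (g : T -> nat) N d r :
  (\big[minn/N]_(x <- r | P x) g x <= d) = (N <= d) || has (fun x => P x && (g x <= d)) r.
Proof.
elim: r => [|x r IH]; first by rewrite big_nil orbF.
rewrite big_cons /=; case: (P x) => /=; last by [].
by rewrite geq_min IH; case: (g x <= d); case: (N <= d).
Qed.

Lemma setdist_le v (S : {set T}) d : d < #|T| ->
  (setdist e v S <= d) = [exists x in S, gdist e v x <= d].
Proof.
move=> dN; rewrite /setdist bigmin_le leqNgt dN /=.
apply/hasP/existsP => [[x _ H]|[x H]]; first by exists x.
by exists x => //; rewrite mem_index_enum.
Qed.

End Gen.

Fixpoint dec (s : nat) : nat * nat :=
  match s with
  | 0 => (0, 1)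
  | s'.+1 => let (i, j) := dec s' in if i.+1 < j then (i.+1, j) else (0, j.+1)
  end.

Lemma dec_spec s : (dec s).1 < (dec s).2 /\ s = 'C((dec s).2, 2) + (dec s).1.
Proof.
elim: s => [|s [IH1 IH2]] //=.
move: IH1 IH2; case: (dec s) => i j /= h1 h2.
case: ifP => /= h; first lia.
rewrite binS bin1; lia.
Qed.

Lemma bin_uniq i j i' j' : i < j -> i' < j' -> 'C(j,2) + i = 'C(j',2) + i' ->
  j = j' /\ i = i'.
Proof.
move=> h h' E; case: (ltngtP j j') => hj.
- have := leq_bin2l 2 (hj : j.+1 <= j'); rewrite binS bin1; lia.
- have := leq_bin2l 2 (hj : j'.+1 <= j); rewrite binS bin1; lia.
- subst; lia.
Qed.

Lemma dec_inj s s' : dec s = dec s' -> s = s'.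
Proof. by move=> E; rewrite (proj2 (dec_spec s)) (proj2 (dec_spec s')) E. Qed.

Lemma dec_of i j : i < j -> dec ('C(j,2) + i) = (i, j).
Proof.
move=> h; have [h1 h2] := dec_spec ('C(j,2) + i).
have [E1 E2] := bin_uniq h1 h (esym h2).
by move: E1 E2; case: (dec _) => a b /= -> ->.
Qed.

Lemma dec_bound m s : s < 'C(m,2) -> (dec s).2 < m.
Proof.
move=> hs; rewrite ltnNge; apply/negP => H.
have := leq_bin2l 2 H; have [_ E] := dec_spec s; lia.
Qed.

Definition col (v : nat) : nat :=
  if v == 0 then 0 else if odd v then (dec (v.-1)./2).1.+1 else (dec (v.-1)./2).2.+1.

Lemma col_nz a : 0 < a ->
  col a = if odd a then (dec (a.-1)./2).1.+1 else (dec (a.-1)./2).2.+1.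
Proof. by move=> h; rewrite /col; case: ifP => //; lia. Qed.

Lemma col_pos a : 0 < a -> 0 < col a.
Proof. by move=> h; rewrite col_nz //; case: ifP. Qed.

Lemma col_ne a b : 0 < a -> 0 < b -> a != b -> (a.-1)./2 = (b.-1)./2 -> col a != col b.
Proof.
move=> ha hb nab hq; rewrite !col_nz // hq.
have [h _] := dec_spec ((b.-1)./2).
have -> : odd a = ~~ odd b by lia.
case: (odd b) => /=; lia.
Qed.

Lemma key u x v y : 0 < u -> 0 < x -> 0 < v -> 0 < y -> u != x -> v != y ->
  (u.-1)./2 = (x.-1)./2 -> (v.-1)./2 = (y.-1)./2 ->
  col u = col v -> col x = col y -> u = v.
Proof.
move=> hu hx hv hy nux nvy qux qvy.
rewrite !col_nz // -qux -qvy.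
have -> : odd x = ~~ odd u by lia.
have -> : odd y = ~~ odd v by lia.
have [lu _] := dec_spec ((u.-1)./2); have [lv _] := dec_spec ((v.-1)./2).
have dinj : dec ((u.-1)./2) = dec ((v.-1)./2) -> u = v -> u = v by [].
case Ou: (odd u); case Ov: (odd v) => /= h1 h2.
- have E : dec ((u.-1)./2) = dec ((v.-1)./2).
    by move: lu lv h1 h2; case: (dec _) => a b; case: (dec _) => c d /= l1 l2 e1 e2; congr (_, _); lia.
  have := dec_inj E; lia.
- lia.
- lia.
- have E : dec ((u.-1)./2) = dec ((v.-1)./2).
    by move: lu lv h1 h2; case: (dec _) => a b; case: (dec _) => c d /= l1 l2 e1 e2; congr (_, _); lia.
  have := dec_inj E; lia.
Qed.

Section Fr.
Variable t : nat.
Hypothesis ht : 0 < t.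
Notation V := ('I_(2 * t + 1)).
Notation e := (friendship_adj t).

Lemma cardV : #|V| = 2 * t + 1. Proof. by rewrite card_ord. Qed.

Lemma c0P : 0 < 2 * t + 1. Proof. by rewrite addn1. Qed.
Definition c0 : V := Ordinal c0P.
Definition vx (k : nat) : V := insubd c0 k.
Lemma vxE k : k < 2 * t + 1 -> nat_of_ord (vx k) = k.
Proof. by move=> h; rewrite /vx val_insubd h. Qed.

Lemma adjE (x y : V) : e x y =
  ((x : nat) != y) && [|| (x : nat) == 0, (y : nat) == 0 | (x.-1)./2 == (y.-1)./2].
Proof. by []. Qed.

Lemma walk2 (u v : V) : walk_len e 2 u v.
Proof.
have hu := ltn_ord u; have hv := ltn_ord v.
pose w := if ((u : nat) == 0) && ((v : nat) == 0) then 1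
  else if (u : nat) == 0 then (if odd v then v.+1 else v.-1)
  else if (v : nat) == 0 then (if odd u then u.+1 else u.-1) else 0.
have hw : w < 2 * t + 1 by rewrite /w; repeat case: ifP => ?; lia.
apply/existsP; exists [tuple vx w; v] => /=.
rewrite eqxx andbT !adjE vxE //.
rewrite /w; repeat case: ifP => ?; lia.
Qed.

Lemma gdistE (u v : V) : gdist e u v = if u == v then 0 else if e u v then 1 else 2.
Proof.
have h2 : gdist e u v <= 2.
  by rewrite gdist_le ?cardV; [apply/existsP; exists (@Ordinal 3 2 isT); apply: walk2| lia].
have h1 : (gdist e u v <= 1) = (u == v) || e u v.
  rewrite gdist_le ?cardV; last lia.
  apply/existsP/orP => [[[[|[|k]] hk] H]|[H|H]] //.
  - by left; rewrite -(walk_len0 e).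
  - by right; rewrite -(walk_len1 e).
  - by exists (@Ordinal 2 0 isT); rewrite walk_len0.
  - by exists (@Ordinal 2 1 isT); rewrite walk_len1.
have h0 : (gdist e u v <= 0) = (u == v).
  rewrite gdist_le ?cardV; last lia.
  apply/existsP/idP => [[[[|k] hk] H]|H] //.
  - by rewrite -(walk_len0 e).
  - by exists (@Ordinal 1 0 isT); rewrite walk_len0.
case: (u =P v) h0 h1 => [->|ne] h0 h1; first by apply/eqP; rewrite -leqn0 h0.
case: (e u v) h1 => h1; lia.
Qed.

Lemma setdistE (v : V) (S : {set V}) : S != set0 ->
  setdist e v S = if v \in S then 0 else if [exists x in S, e v x] then 1 else 2.
Proof.
move=> /set0Pn [x0 Sx0].
have h2 : setdist e v S <= 2.
  rewrite setdist_le ?cardV; last lia.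
  by apply/existsP; exists x0; rewrite Sx0 gdistE; case: ifP => //; case: ifP.
have h1 : (setdist e v S <= 1) = (v \in S) || [exists x in S, e v x].
  rewrite setdist_le ?cardV; last lia.
  apply/existsP/orP => [[x /andP [Sx]]|[H|/existsP [x /andP [Sx H]]]].
  - rewrite gdistE; case: (v =P x) => [->|_]; first by left.
    by case E: (e v x) => // _; right; apply/existsP; exists x; rewrite Sx E.
  - by exists v; rewrite H gdistE eqxx.
  - by exists x; rewrite Sx gdistE H; case: ifP.
have h0 : (setdist e v S <= 0) = (v \in S).
  rewrite setdist_le ?cardV; last lia.
  apply/existsP/idP => [[x /andP [Sx]]|H].
  - by rewrite gdistE; case: (v =P x) => [->|] //; case: ifP.
  - by exists v; rewrite H gdistE eqxx.
case: (v \in S) h0 h1 => h0 h1; first by apply/eqP; rewrite -leqn0 h0.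
case: [exists x in S, e v x] h1 => h1; lia.
Qed.

Lemma codeE k (f : {ffun V -> 'I_k}) (v : V) (i : 'I_k) :
  proper_coloring e f ->
  color_code e f v i = if f v == i then 0
     else if [exists x, e v x && (f x == i)] then 1 else 2.
Proof.
case/andP=> _ /forallP onto.
rewrite /color_code ffunE setdistE.
  rewrite /color_class inE; case: (f v == i) => //.
  have -> : [exists x in [set x0 | f x0 == i], e v x] = [exists x, e v x && (f x == i)] by apply/existsP/existsP => [[x H]|[x H]]; exists x; move: H; rewrite !inE andbC.

  by [].
by apply/set0Pn; case/existsP: (onto i) => x H; exists x; rewrite inE.
Qed.


Lemma set2_eq (K : finType) (x y x' y' : K) : x != y ->
  [set x; y] = [set x'; y'] -> (x = x' /\ y = y') \/ (x = y' /\ y = x').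
Proof.
move=> nxy E.
have : x \in [set x'; y'] by rewrite -E set21.
have : y \in [set x'; y'] by rewrite -E set22.
case/set2P => Ey; case/set2P => Ex; subst; try by move: nxy; rewrite eqxx.
- by right.
- by left.
Qed.

Lemma eqV (x y : V) : (x == y) = ((x : nat) == y). Proof. by []. Qed.

Lemma lower k (f : {ffun V -> 'I_k}) m : locating_coloring e f ->
  (forall j, t <= 'C(j, 2) -> m <= j) -> m.+1 <= k.
Proof.
move=> /andP [pf /forallP loc] hmin.
have pf' := pf; case/andP: pf' => /forallP prop _.
have adjne x y : e x y -> f x != f y.
  by move=> H; have := forallP (prop x) y; rewrite H.
pose c := vx 0; pose o (s : 'I_t) := vx (2*s+1); pose p (s:'I_t) := vx (2*s+2).
have hs (s : 'I_t) : s < t := ltn_ord s.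
have vc : (c : nat) = 0 by rewrite vxE //; lia.
have vo s : (o s : nat) = 2*s+1 by rewrite vxE //; have := hs s; lia.
have vp s : (p s : nat) = 2*s+2 by rewrite vxE //; have := hs s; lia.
have eo s x : e (o s) x = (x == c) || (x == p s).
  rewrite adjE !eqV vo vp vc; have := hs s; lia.
have ep s x : e (p s) x = (x == c) || (x == o s).
  rewrite adjE !eqV vo vp vc; have := hs s; lia.
have code_o s i : color_code e f (o s) i = if f (o s) == i then 0
     else if (f c == i) || (f (p s) == i) then 1 else 2.
  rewrite codeE //; case: (f (o s) == i) => //.
  have -> // : [exists x, e (o s) x && (f x == i)] = (f c == i) || (f (p s) == i).
  apply/existsP/orP => [[x /andP [H1 H2]]|[H|H]].
  - by rewrite eo in H1; case/orP: H1 => /eqP E; subst x; [left|right].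
  - by exists c; rewrite eo eqxx H.
  - by exists (p s); rewrite eo eqxx orbT H.
have code_p s i : color_code e f (p s) i = if f (p s) == i then 0
     else if (f c == i) || (f (o s) == i) then 1 else 2.
  rewrite codeE //; case: (f (p s) == i) => //.
  have -> // : [exists x, e (p s) x && (f x == i)] = (f c == i) || (f (o s) == i).
  apply/existsP/orP => [[x /andP [H1 H2]]|[H|H]].
  - by rewrite ep in H1; case/orP: H1 => /eqP E; subst x; [left|right].
  - by exists c; rewrite ep eqxx H.
  - by exists (o s); rewrite ep eqxx orbT H.
pose A (s : 'I_t) := [set f (o s); f (p s)].
have nop s : f (o s) != f (p s) by apply: adjne; rewrite eo eqxx orbT.
have noc s : f (o s) != f c by apply: adjne; rewrite eo eqxx.
have npc s : f (p s) != f c by apply: adjne; rewrite ep eqxx.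
have Ainj : injective A.
  move=> s s' /(set2_eq (nop s)) [[E1 E2]|[E1 E2]].
  - have := forallP (loc (o s)) (o s').
    have -> : color_code e f (o s) == color_code e f (o s').
      by apply/eqP/ffunP => i; rewrite !code_o E1 E2.
    rewrite eqV !vo => /eqP H; apply: val_inj => /=; lia.
  - have := forallP (loc (o s)) (p s').
    have -> : color_code e f (o s) == color_code e f (p s').
      by apply/eqP/ffunP => i; rewrite code_o code_p E1 E2.
    rewrite eqV vo vp => /eqP H; lia.
have kpos : 0 < k by case: (f c) => j; lia.
apply: (@leq_ltn_trans k.-1); last lia.
apply: hmin.
have -> : k.-1 = #|[set~ f c]| by rewrite cardsC1 card_ord.
rewrite -cards_draws.
apply: (@leq_trans #|[set A s | s : 'I_t]|); first by rewrite card_imset // card_ord.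
apply: subset_leq_card; apply/subsetP => B /imsetP [s _ ->].
rewrite inE cards2 nop andbT; apply/subsetP => x /set2P [] ->; rewrite !inE.
- exact: noc.
- exact: npc.
Qed.


Lemma upper m : t <= 'C(m, 2) -> (forall j, t <= 'C(j, 2) -> m <= j) ->
  has_locating_coloring e m.+1.
Proof.
move=> hm hmin.
have hm1 : 'C(m.-1, 2) < t.
  rewrite ltnNge; apply/negP => H; have := hmin _ H.
  case: m hm {hmin H} => [|m] //=; first by rewrite bin_small //; lia.
  lia.
have hcol (v : V) : col v <= m.
  rewrite /col; case: ifP => // nz.
  have hq : (v.-1)./2 < 'C(m, 2) by have := ltn_ord v; lia.
  have := dec_bound hq; have [h _] := dec_spec ((v.-1)./2); case: ifP => _; lia.
pose f := [ffun v : V => (inord (col v) : 'I_m.+1)].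
have fE v : (f v : nat) = col v by rewrite ffunE inordK // ltnS hcol.
have feq u v : (f u == f v) = (col u == col v) by rewrite -[f u == f v]/((f u : nat) == f v) !fE.
have pf : proper_coloring e f.
  apply/andP; split.
    apply/forallP => x; apply/forallP => y; apply/implyP; rewrite adjE => H.
    rewrite feq.
    case x0 : ((x : nat) == 0).
      have y0 : 0 < y by lia.
      by rewrite [col x]/col x0; have := col_pos y0; lia.
    case y0 : ((y : nat) == 0).
      have x0' : 0 < x by lia.
      by rewrite [col y]/col y0; have := col_pos x0'; lia.
    apply: col_ne; lia.
  apply/forallP => i; apply/existsP.
  case: i => [[|c'] hc].
    exists (vx 0); rewrite -[_ == _]/((f (vx 0) : nat) == 0) fE vxE //; lia.
  case c0' : (c' == 0).
    exists (vx 1); rewrite -[_ == _]/((f (vx 1) : nat) == c'.+1) fE vxE; last lia.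
    by rewrite (eqP c0').
  have hq : 'C(c', 2) < t.
    apply: leq_ltn_trans hm1; apply: leq_bin2l; lia.
  exists (vx ('C(c', 2).*2 + 2)).
  rewrite -[_ == _]/((f _ : nat) == c'.+1) fE vxE; last lia.
  rewrite col_nz; last lia.
  have -> : odd ('C(c', 2).*2 + 2) = false by rewrite addn2 /= odd_double.
  have -> : (('C(c', 2).*2 + 2).-1)./2 = 'C(c', 2) + 0 by lia.
  by rewrite dec_of //; lia.
apply/existsP; exists f; apply/andP; split => //.
apply/forallP => u; apply/forallP => v; apply/implyP => /eqP Hc.
have fuv : f u = f v.
  have := congr1 (fun g : {ffun 'I_m.+1 -> nat} => g (f u)) Hc; rewrite /= !codeE // eqxx.
  case E : (f v == f u); first by rewrite (eqP E).
  by case: ifP.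
have cuv : col u = col v by rewrite -!fE fuv.
apply/eqP; apply: val_inj => /=.
case u0 : ((u : nat) == 0).
  have : col v = 0 by rewrite -cuv /col u0.
  case v0 : ((v : nat) == 0); first lia.
  have := @col_pos v; lia.
have hu := ltn_ord u.
pose pu := if odd u then u.+1 else u.-1.
have hpu : pu < 2 * t + 1 by rewrite /pu; case: ifP; lia.
pose x := vx pu.
have vxp : (x : nat) = pu by rewrite vxE.
have eux : e u x by rewrite adjE vxp /pu; case: ifP; lia.
have fxu : f x != f u.
  by have := forallP (forallP (andP pf).1 u) x; rewrite eux /= eq_sym.
have Hx := congr1 (fun g : {ffun 'I_m.+1 -> nat} => g (f x)) Hc; rewrite /= !codeE // in Hx.
have fux : f u != f x by rewrite eq_sym.
rewrite (negbTE fux) -fuv (negbTE fux) in Hx.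
have : [exists y, e u y && (f y == f x)] by apply/existsP; exists x; rewrite eux eqxx.
move=> ex; rewrite ex in Hx.
case: ifP Hx => // /existsP [y /andP [evy fyx]] _.
have cxy : col x = col y by rewrite -!fE (eqP fyx).
have v0 : 0 < v.
  rewrite lt0n; apply/negP => /eqP v0.
  have : col v = 0 by rewrite /col v0.
  have := @col_pos u; lia.
have x0 : 0 < x by rewrite vxp /pu; case: ifP; lia.
have y0 : 0 < y.
  rewrite lt0n; apply/negP => /eqP y0.
  have : col y = 0 by rewrite /col y0.
  have := @col_pos x x0; lia.
rewrite adjE in evy; rewrite adjE in eux.
apply: (@key u x v y); try lia.
Qed.

End Fr.

Theorem proposition2 (t : nat) (ht : 0 < t) (m : nat)
  (hm : t <= 'C(m, 2))
  (hmin : forall k : nat, t <= 'C(k, 2) -> m <= k) :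
  locating_chromatic_number (friendship_adj t) = 1 + m.
Proof.
have hm2 : m <= t.+1 by apply: hmin; rewrite binS bin1; lia.
rewrite /locating_chromatic_number.
set a := has_locating_coloring (friendship_adj t).
have hup : a m.+1 := upper ht hm hmin.
have hsz : m.+1 < #|'I_(2 * t + 1)|.+1 by rewrite card_ord; lia.
have hle : find a (iota 0 #|'I_(2 * t + 1)|.+1) <= m.+1.
  rewrite find_iota_le //; apply/existsP; exists ord_max; exact hup.
have hge : m.+1 <= find a (iota 0 #|'I_(2 * t + 1)|.+1).
  have hs : has a (iota 0 #|'I_(2 * t + 1)|.+1).
    by apply/hasP; exists m.+1; [rewrite mem_iota; lia | exact hup].
  have := nth_find 0 hs; rewrite nth_iota; last by move: hs; rewrite has_find size_iota.
  rewrite add0n => /existsP [f Hf].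
  exact: (lower ht Hf hmin).
by apply/eqP; rewrite eqn_leq add1n hle hge.
Qed.
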